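(* Let $p$ be an odd prime and let $F_{g\,\mathsf{PR},\,h\,\mathsf{ANY}}(p)$ denote the number of pairs $(g,h)$ of integers with $1\le g\le p-1$, $1\le h\le p-1$, $g$ a primitive root modulo $p$, and $g^{h}\equiv h \pmod p$. Then \[ \left|F_{g\,\mathsf{PR},\,h\,\mathsf{ANY}}(p)-\phi(p-1)\right|\le d(p-1)^{2}\,\sigma(p-1)\,\sqrt{p}\,(1+\ln p). \]
   Context: $\phi$ is Euler's totient function, $d(n)$ denotes the number of positive divisors of $n$, $\sigma(n)$ the sum of the positive divisors of $n$, and $\ln$ the natural logarithm. *)

(* Defs.v *)
From Stdlib Require Import Reals.
From mathcomp Require Import all_boot.

Definition prim_root_mod (n g : nat) : bool :=
  coprime g n &&
  [forall k : 'I_(totient n), (0 < (k : nat))%N ==> (g ^ k %% n != 1 %% n)].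

Definition ndiv (n : nat) : nat := size (divisors n).
Definition sigma_div (n : nat) : nat := \sum_(d <- divisors n) d.

Definition F_PR_ANY (p : nat) : nat :=
  #|[set gh : 'I_p * 'I_p |
      [&& (0 < (gh.1 : nat))%N, (0 < (gh.2 : nat))%N,
          prim_root_mod p gh.1 &
          ((gh.1 : nat) ^ (gh.2 : nat) == gh.2 %[mod p])]]|.

(* Main.v *)
Require Import Defs.
From Stdlib Require Import Reals Lra.
From mathcomp Require Import all_boot.
From mathcomp Require Import all_algebra all_field.

Section Key.
Import GRing.Theory.
Local Open Scope ring_scope.
Lemma Fp_natE (p : nat) (pp : prime p) (a b : nat) :
  ((a%:R : 'F_p) == b%:R) = (a == b %[mod p])%N.
Proof.
apply/eqP/eqP => [H|H].
  by have := congr1 (fun x : 'F_p => (x : nat)) H; rewrite /= !val_Fp_nat.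
by apply: val_inj; rewrite /= !(val_Fp_nat pp).
Qed.

Lemma Fp_pm1 (p : nat) (pp : prime p) (x : 'F_p) : x != 0 -> x ^+ p.-1 = 1.
Proof.
move=> x0; have := expf_card x; rewrite card_Fp //.
have E : (p = 1 + p.-1)%N by rewrite add1n prednK // prime_gt0.
move=> H; have : x ^+ (1 + p.-1) = x by rewrite -E.
rewrite exprD expr1.
by move=> H2; apply: (mulfI x0); rewrite H2 mulr1.
Qed.

Lemma key (p h c : nat) : prime p -> (0 < h)%N ->
  (#|[set g : 'I_p | (0 < (g:nat))%N && ((g:nat) ^ h == c %[mod p])%N]| <= gcdn h p.-1)%N.
Proof.
move=> pp h0; set S := [set _ | _].
have [->|[g1 Hg1]] := set_0Vmem S; first by rewrite cards0.
pose t := gcdn h p.-1.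
have t0 : (0 < t)%N by rewrite gcdn_gt0 h0.
pose f := fun g : 'I_p => ((g : nat)%:R : 'F_p).
pose P : {poly 'F_p} := 'X^t - ((f g1) ^+ t)%:P.
have sP : size P = t.+1 by rewrite size_XnsubC.
have P0 : P != 0 by rewrite -size_poly_eq0 sP.
have powt : forall g, g \in S -> f g ^+ t = (c%:R : 'F_p) ^+ (egcdn h p.-1).1.
  move=> g; rewrite inE => /andP [g0 gc].
  have fg0 : f g != 0.
    rewrite /f -(mulr0n 1 : (0%:R : 'F_p) = 0) Fp_natE // mod0n modn_small //.
    by rewrite -lt0n.
  have : (c%:R : 'F_p) = f g ^+ h.
    by apply/eqP; rewrite eq_sym /f -natrX Fp_natE.
  move=> ->; rewrite -exprM.
  case: (egcdnP p.-1 h0) => km kn E _ /=.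
  by rewrite mulnC E exprD mulnC exprM Fp_pm1 // expr1n mul1r.
have := max_poly_roots P0 (rs := [seq f g | g <- enum S]).
rewrite size_map -cardE sP ltnS; apply.
  apply/allP => x /mapP [g]; rewrite mem_enum => gS ->.
  by rewrite /root hornerD hornerN hornerXn hornerC powt // powt // subrr.
rewrite map_inj_uniq ?enum_uniq // => a b /eqP; rewrite Fp_natE // !modn_small //.
by move=> /eqP/val_inj.
Qed.
End Key.
Lemma count_dvd d n : 0 < d -> \sum_(i < n) (d %| i.+1 : nat) = n %/ d.
Proof.
move=> d0; elim: n => [|n IH]; first by rewrite big_ord0 div0n.
by rewrite big_ord_recr /= IH divnS // addnC.
Qed.

Lemma gcd_le_sum n i : 0 < n ->
  gcdn i.+1 n <= \sum_(d <- divisors n) (d %| i.+1) * d.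
Proof.
move=> n0; have gin : gcdn i.+1 n \in divisors n by rewrite -dvdn_divisors // dvdn_gcdr.
rewrite (bigD1_seq _ gin (divisors_uniq n)) /= dvdn_gcdl mul1n.
exact: leq_addr.
Qed.

Lemma sum_gcd n : \sum_(i < n) gcdn i.+1 n <= n * size (divisors n).
Proof.
case: n => [|n]; first by rewrite big_ord0.
set m := n.+1.
apply: (@leq_trans (\sum_(i < m) \sum_(d <- divisors m) (d %| i.+1) * d)).
  by apply: leq_sum => i _; apply: gcd_le_sum.
rewrite exchange_big /=.
apply: (@leq_trans (\sum_(d <- divisors m) m)).
  rewrite big_seq_cond [X in _ <= X]big_seq_cond.
  apply: leq_sum => d /andP [dd _].
  have d0 : 0 < d by move: dd; rewrite -dvdn_divisors // => /dvdn_gt0; apply.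
  under eq_bigr => i _ do rewrite mulnC.
  by rewrite -big_distrr /= count_dvd // mulnC leq_trunc_div.
by rewrite big_const_seq count_predT iter_addn_0 mulnC.
Qed.

Lemma le_sigma n : 0 < n -> n <= \sum_(d <- divisors n) d.
Proof.
move=> n0; have nin : n \in divisors n by rewrite -dvdn_divisors.
by rewrite (bigD1_seq _ nin (divisors_uniq n)) /= leq_addr.
Qed.

Lemma ndiv_gt0 n : 0 < n -> 0 < size (divisors n).
Proof.
move=> n0; have nin : n \in divisors n by rewrite -dvdn_divisors.
by case: (divisors n) nin.
Qed.

Lemma totient_le n : totient n <= n.
Proof.
rewrite totient_count_coprime.
apply: (@leq_trans (\sum_(0 <= d < n) 1)); first by apply: leq_sum => i _; case: coprime.
by rewrite sum_nat_const_nat subn0 muln1.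
Qed.
Lemma F_le (n : nat) : prime n.+1 ->
  F_PR_ANY n.+1 <= \sum_(i < n) gcdn i.+1 n.
Proof.
move=> pp; rewrite /F_PR_ANY; set A := [set _ | _].
rewrite -sum1_card big_mkcond /=.
have -> : \sum_(gh : 'I_n.+1 * 'I_n.+1) (if gh \in A then 1 else 0) =
   \sum_(g : 'I_n.+1) \sum_(h : 'I_n.+1) (if (g, h) \in A then 1 else 0).
  by rewrite pair_bigA; apply: eq_bigr => -[g h].
rewrite exchange_big /= big_ord_recl /=.
rewrite big1 ?add0n; last by move=> g _; rewrite inE /= andbF.
apply: leq_sum => i _.
apply: (@leq_trans #|[set g : 'I_n.+1 | (0 < (g:nat)) && ((g:nat) ^ (bump 0 i) == (bump 0 i) %[mod n.+1])]|); last first.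
  exact: (@key n.+1 (bump 0 i) (bump 0 i) pp (isT : 0 < bump 0 i)).
rewrite -sum1_card [X in _ <= X]big_mkcond /=; apply: leq_sum => g _; rewrite !inE /=.
by case: (0 < (g:nat)); case: prim_root_mod; rewrite /= ?andbF //; case: (_ == _).
Qed.

Open Scope R_scope.

Theorem mainTheorem2 (p : nat) (hp : prime p) (hodd : odd p) :
  Rabs (INR (F_PR_ANY p) - INR (totient (p - 1)%N)) <=
  INR (ndiv (p - 1)%N) ^ 2 * INR (sigma_div (p - 1)%N) * sqrt (INR p) * (1 + ln (INR p)).
Proof.
have p0 : (0 < p)%N by apply: prime_gt0.
have p3 : (2 < p)%N.
  move: hodd (prime_gt1 hp); case: p {p0 hp} => [|[|[|q]]] //.
case: p hp hodd p0 p3 => [|n] // hp _ _ p3.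
rewrite subSS subn0.
have n0 : (0 < n)%N by case: n p3 hp.
have HF := @F_le n hp; have HG := sum_gcd n.
have HT := totient_le n; have HS := @le_sigma n n0; have HD := @ndiv_gt0 n n0.
rewrite /ndiv /sigma_div.
set N := F_PR_ANY n.+1 in HF *; set T := totient n in HT *.
set D := size (divisors n) in HG HD *; set S := \sum_(d <- divisors n) d in HS *.
have HN : (N <= n * D)%N by apply: leq_trans HF HG.
have HT' : (T <= n * D)%N by apply: leq_trans HT _; rewrite leq_pmulr.
have HM : (n * D <= D * D * S)%N.
  rewrite mulnC -mulnA; apply: leq_mul => //.
  by apply: leq_trans HS _; rewrite leq_pmull.
have rN : INR N <= INR (D * D * S) by apply/le_INR/leP/(leq_trans HN HM).
have rT : INR T <= INR (D * D * S) by apply/le_INR/leP/(leq_trans HT' HM).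
rewrite !mult_INR in rN rT.
have hs : 1 <= sqrt (INR n.+1).
  rewrite -sqrt_1; apply: sqrt_le_1_alt; rewrite S_INR; have := pos_INR n; lra.
have hl : 0 <= ln (INR n.+1).
  have hn : 0 < INR n by apply: lt_0_INR; apply/ltP.
  rewrite -ln_1; apply: Rlt_le; apply: ln_increasing; first lra. rewrite S_INR; lra.
have X0 : 0 <= INR D * INR D * INR S by have := pos_INR D; have := pos_INR S; nra.
have hN := pos_INR N; have hT := pos_INR T.
have K : INR D * INR D * INR S <= INR D ^ 2 * INR S * sqrt (INR n.+1) * (1 + ln (INR n.+1)).
  replace (INR D ^ 2) with (INR D * INR D) by ring.
  have := Rmult_le_compat_l _ _ _ X0 hs; rewrite Rmult_1_r => K1.
  have h1 : 1 <= 1 + ln (INR n.+1) by lra.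
  have := Rmult_le_compat_l _ _ _ (Rle_trans _ _ _ X0 K1) h1; rewrite Rmult_1_r; lra.
apply: Rle_trans K; apply: Rabs_le; split; lra.
Qed.
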